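(* Let $M$ be a finite set of items and $\preceq$ a monotone preference over $2^M$. If $\preceq$ satisfies satiation-only-at-the-top (in particular, if it satisfies non-satiation), then $\preceq$ can be represented by a submodular valuation. Consequently, the class of monotone preferences representable by a submodular valuation equals the class of monotone preferences satisfying satiation-only-at-the-top.
   Context: A monotone preference $\preceq$ is a complete and transitive weak order on $2^M$ with $S\preceq T$ whenever $S\subseteq T$; $S\prec T$ means $S\preceq T$ and not $T\preceq S$, and $S=T$ in preference means both $S\preceq T$ and $T\preceq S$. $\preceq$ satisfies non-satiation if $T\prec T\cup\{j\}$ for every $T$ and $j\notin T$. It satisfies satiation-only-at-the-top if for all sets $T\subset S$ and every item $j\notin S$: if $T$ and $T\cup\{j\}$ are indifferent, then $S$ and $S\cup\{j\}$ are indifferent. A valuation $v:2^M\to\mathbb R_{\ge0}$ with $v(\emptyset)=0$ represents $\preceq$ if $S\preceq T\iff v(S)\le v(T)$ and $S\prec T\iff v(S)<v(T)$; $v$ is submodular if $v(S)+v(T)\ge v(S\cup T)+v(S\cap T)$ for all $S,T$. *)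

(* Defs.v *)
From mathcomp Require Import all_boot all_order all_algebra.
From mathcomp Require Import Rstruct.
Set Implicit Arguments. Unset Strict Implicit. Unset Printing Implicit Defensive.
Import Order.TTheory GRing.Theory Num.Theory.
Local Open Scope ring_scope.

(* A preference on 2^M is a boolean relation [pref S T] read "S ⪯ T". *)
Definition preference (M : finType) := {set M} -> {set M} -> bool.

Section Prefs.
Variable M : finType.
Variable pref : preference M.

Definition strict_pref (S T : {set M}) : bool := pref S T && ~~ pref T S.
Definition indiff (S T : {set M}) : bool := pref S T && pref T S.

Definition monotone_preference : Prop :=
  [/\ (forall S T : {set M}, pref S T || pref T S),
      (forall S T U : {set M}, pref S T -> pref T U -> pref S U) &
      (forall S T : {set M}, S \subset T -> pref S T)].

Definition non_satiation : Prop :=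
  forall (T : {set M}) (j : M), j \notin T -> strict_pref T (j |: T).

Definition satiation_only_at_the_top : Prop :=
  forall (T S : {set M}) (j : M), T \proper S -> j \notin S ->
    indiff T (j |: T) -> indiff S (j |: S).

Definition represents (v : {set M} -> Rdefinitions.R) : Prop :=
  [/\ (forall S : {set M}, 0 <= v S), v set0 = 0,
      (forall S T : {set M}, pref S T <-> v S <= v T) &
      (forall S T : {set M}, strict_pref S T <-> v S < v T)].

Definition submodular (v : {set M} -> Rdefinitions.R) : Prop :=
  forall S T : {set M}, v (S :|: T) + v (S :&: T) <= v S + v T.

Definition representable_by_submodular : Prop :=
  exists v : {set M} -> Rdefinitions.R, represents v /\ submodular v.
End Prefs.

(* Main.v *)
Require Import Defs.
From mathcomp Require Import all_boot all_order all_algebra.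
From mathcomp Require Import Rstruct.
Import Order.TTheory GRing.Theory Num.Theory.

Section Proofs.
Variable M : finType.
Variable pref : preference M.
Hypothesis Hm : monotone_preference pref.

Let Hcomp : forall S T, pref S T || pref T S. Proof. by case: Hm. Qed.
Let Htr : forall {S T U : {set M}}, pref S T -> pref T U -> pref S U. Proof. by case: Hm. Qed.
Let Hsub : forall S T : {set M}, S \subset T -> pref S T. Proof. by case: Hm. Qed.

Definition nrank (S : {set M}) : nat := #|[set U | strict_pref pref U S]|.

Lemma nrank_le S T : pref S T <-> (nrank S <= nrank T)%N.
Proof.
split.
- move=> hST; apply: subset_leq_card; apply/subsetP => U.
  rewrite !inE /strict_pref => /andP [hUS hSU]; rewrite (Htr hUS hST) /=.
  apply/negP => hTU; by rewrite (Htr hST hTU) in hSU.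
- move=> hle; apply/negPn/negP => hST.
  have hTS : pref T S by move: (Hcomp S T); rewrite (negbTE hST).
  have : (nrank T < nrank S)%N.
    apply: proper_card; apply/properP; split.
    + apply/subsetP => U; rewrite !inE /strict_pref => /andP [hUT hTU].
      rewrite (Htr hUT hTS) /=; apply/negP => hSU; by rewrite (Htr hTS hSU) in hTU.
    + exists T; rewrite !inE /strict_pref ?hTS ?hST //.
      by apply/negP => /andP [_ /negP]; apply; apply: Hsub.
  by rewrite ltnNge hle.
Qed.

Lemma nrank0 : nrank set0 = 0%N.
Proof.
apply/eqP; rewrite cards_eq0; apply/eqP/setP => U; rewrite !inE /strict_pref.
by rewrite (Hsub _ _ (sub0set U)) andbF.
Qed.

Hypothesis Hsoat : satiation_only_at_the_top pref.

Lemma step_lem (A Y : {set M}) (j : M) : A \subset Y -> pref (j |: A) A -> pref (j |: Y) Y.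
Proof.
move=> hAY hj.
case: (boolP (j \in Y)) => jY.
  by apply: Hsub; rewrite subUset sub1set jY subxx.
case: (eqVneq A Y) => [<- //|nAY].
have pAY : A \proper Y by rewrite properEneq nAY hAY.
by case/andP: (Hsoat _ _ _ pAY jY (introT andP (conj (Hsub _ _ (subsetUr _ _)) hj))).
Qed.

Lemma chain_lem k : forall A B Y : {set M}, #|B :\: A| = k -> A \subset B -> pref B A ->
  A \subset Y -> pref (B :|: Y) Y.
Proof.
elim: k => [|k IH] A B Y hk hAB hBA hAY.
  have -> : B = A.
    apply/eqP; rewrite eqEsubset hAB andbT; apply/subsetP => x xB.
    apply/negPn/negP => xA.
    have : x \in B :\: A by rewrite inE xA xB.
    by move/cards0_eq: hk => ->; rewrite inE.
  by apply: Hsub; rewrite subUset hAY subxx.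
have : (0 < #|B :\: A|)%N by rewrite hk.
case/card_gt0P => j; rewrite inE => /andP [jA jB].
set B' := B :\ j.
have hAB' : A \subset B'.
  apply/subsetP => x xA; rewrite /B' in_setD1 (subsetP hAB _ xA) andbT.
  by apply/eqP => ex; rewrite ex in xA; rewrite xA in jA.
have hB'B : B' \subset B by apply: subsetDl.
have eB : j |: B' = B by rewrite setD1K.
have hk' : #|B' :\: A| = k.
  have : B :\: A = j |: (B' :\: A).
    apply/setP => x; rewrite !inE; case: (eqVneq x j) => [->|] //=.
    by rewrite jA jB.
  move=> e; move: hk; rewrite e cardsU1 !inE eqxx andbF /= add1n; by case.
have IH' := IH A B' Y hk' hAB' (Htr (Hsub _ _ hB'B) hBA) hAY.
have hs : pref (j |: (B' :|: Y)) (B' :|: Y).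
  apply: (@step_lem B'); first exact: subsetUl.
  by rewrite eB; apply: (Htr hBA); apply: Hsub.
have -> : B :|: Y = j |: (B' :|: Y) by rewrite setUA eB.
exact: Htr hs IH'.
Qed.

Lemma key S T : pref S (S :&: T) -> pref (S :|: T) T.
Proof.
move=> h.
have := @chain_lem _ (S :&: T) S T erefl (subsetIl _ _) h (subsetIr _ _).
by [].
Qed.

End Proofs.
Arguments nrank {M} pref S.
Arguments nrank_le {M pref} Hm S T.
Arguments nrank0 {M pref} Hm.
Arguments key {M pref} Hm Hsoat S T.

Local Open Scope ring_scope.

Definition hx (n : nat) : Rdefinitions.R := (2^-1) ^+ n.

Lemma hx_ge0 n : 0 <= hx n.
Proof. by rewrite /hx exprn_ge0 // invr_ge0. Qed.

Lemma hx_le1 n : hx n <= 1.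
Proof. by rewrite /hx exprn_ile1 // ?invr_ge0 // invf_le1 // ler1n. Qed.

Lemma hx_mono m n : (m <= n)%N -> hx n <= hx m.
Proof. by move=> h; rewrite /hx ler_wiXn2l // ?invr_ge0 // invf_le1 // ler1n. Qed.

Lemma hx_mono_iff m n : (hx n <= hx m) = (m <= n)%N.
Proof.
apply/idP/idP; last exact: hx_mono.
by rewrite /hx ler_iXn2l // ?invr_gt0 // invf_lt1 // ltr1n.
Qed.

Lemma hxS n : hx n.+1 = hx n / 2.
Proof. by rewrite /hx exprSr. Qed.

Theorem mainTheorem9 (M : finType) (pref : preference M) :
  monotone_preference pref ->
  [/\ (satiation_only_at_the_top pref -> representable_by_submodular pref),
      (non_satiation pref -> representable_by_submodular pref) &
      (representable_by_submodular pref <-> satiation_only_at_the_top pref)].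
Proof.
move=> Hm.
have Hsub : forall S T : {set M}, S \subset T -> pref S T by case: Hm.
have A : satiation_only_at_the_top pref -> representable_by_submodular pref.
  move=> Hs.
  exists (fun S => 1 - hx (nrank pref S)); split; first split.
  - by move=> S; rewrite subr_ge0 hx_le1.
  - by rewrite nrank0 // /hx expr0 subrr.
  - by move=> S T; rewrite lerD2l lerN2 hx_mono_iff; apply: nrank_le.
  - move=> S T; rewrite /strict_pref.
    have e1 := nrank_le Hm S T; have e2 := nrank_le Hm T S.
    rewrite ltrD2l ltrN2 ltNge hx_mono_iff -ltnNge.
    split.
    + by case/andP => h1 h2; rewrite ltn_neqAle (proj1 e1 h1) andbT;
         apply/negP => /eqP ee; move: h2; rewrite (proj2 e2) // ee.
    + move=> hl; apply/andP; split; first by apply/e1; apply: ltnW.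
      by apply/negP => /e2; rewrite leqNgt hl.
  - move=> S T.
    set a := nrank pref (S :&: T); set b := nrank pref S;
    set c := nrank pref T; set d := nrank pref (S :|: T).
    have hab : (a <= b)%N by apply/(nrank_le Hm)/Hsub/subsetIl.
    have hac : (a <= c)%N by apply/(nrank_le Hm)/Hsub/subsetIr.
    suff : hx b + hx c <= hx a + hx d.
      move: (hx a) (hx b) (hx c) (hx d) => xa xb xc xd h /=.
      rewrite addrACA [in X in _ <= X]addrACA lerD2l -!opprD lerN2.
      by rewrite [xd + _]addrC.
    case: (leqP b a) => hba.
      have hdc : (d <= c)%N by apply/(nrank_le Hm)/(key Hm Hs)/(nrank_le Hm).
      have -> : b = a by apply/eqP; rewrite eqn_leq hba hab.
      by rewrite lerD2l hx_mono.
    case: (leqP c a) => hca.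
      have hdb : (d <= b)%N.
        apply/(nrank_le Hm); rewrite setUC; apply: (key Hm Hs).
        by rewrite setIC; apply/(nrank_le Hm).
      have -> : c = a by apply/eqP; rewrite eqn_leq hca hac.
      by rewrite addrC lerD2l hx_mono.
    have h1 := hx_mono _ _ hba; have h2 := hx_mono _ _ hca.
    rewrite hxS in h1 h2.
    apply: (le_trans (lerD h1 h2)).
    rewrite -splitr lerDl; exact: hx_ge0.
split => //.
- move=> Hn; apply: A => T S j hTS jS /andP [_ h].
  have jT : j \notin T by apply/negP => jT; rewrite (subsetP (proper_sub hTS) _ jT) in jS.
  by move: (Hn T j jT); rewrite /strict_pref h andbF.
- split; last exact: A.
  case=> v [[hv0 hv00 hle hlt] hsm] T S j hTS jS /andP [h1 h2].
  have tS := proper_sub hTS.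
  have hv : v (j |: T) <= v T by apply/hle.
  have e1 : S :|: (j |: T) = j |: S.
    by rewrite setUCA; congr (_ |: _); apply/setUidPl.
  have e2 : S :&: (j |: T) = T.
    rewrite setIUr (setIidPr tS).
    have -> : S :&: [set j] = set0.
      apply/setP => x; rewrite !inE; apply/negP => /andP [xS /eqP ex].
      by rewrite -ex xS in jS.
    by rewrite set0U.
  have := hsm S (j |: T); rewrite e1 e2 => hh.
  apply/andP; split; first by apply: Hsub; apply: subsetUr.
  apply/hle.
  have h3 : v (j |: S) + v T <= v S + v T := le_trans hh (lerD (lexx _) hv).
  by rewrite lerD2r in h3.
Qed.
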